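(* Let $f\colon\tilde M\to\mathbb H$ be a minimal surface with conjugate $f^*$, and let $\gamma\in\pi_1(M)$ act with $\gamma^*f=f+\tau$, $\gamma^*f^*=f^*+\tau^*$, where $\tau=(\tau_0,\tau_1,\tau_2,\tau_3)$, $\tau^*=(\tau_0^*,\tau_1^*,\tau_2^*,\tau_3^* )\in\mathbb R^4$. Let $\mu\in\mathbb C\setminus\{0,1\}$, $s=-\ln|\mu|$, $t\in\mathbb R$ with $e^{s+it}=\frac{\bar\mu-1}{\bar\mu(1-\mu)}$. Then the simple factor dressing $f^\mu$ with parameter $\mu$ satisfies $\gamma^*f^\mu=f^\mu+\tau^\mu$ with $$\tau^\mu=\begin{pmatrix}\tau_0\\ \tau_1\\ \cos t\,(\tau_2\cosh s-\tau_3^*\sinh s)-\sin t\,(\tau_3\cosh s+\tau_2^*\sinh s)\\ \sin t\,(\tau_2\cosh s-\tau_3^*\sinh s)+\cos t\,(\tau_3\cosh s+\tau_2^*\sinh s)\end{pmatrix}.$$ In particular $\gamma^*f^\mu=f^\mu$ if and only if $\tau_0=\tau_1=0$ and $(\tau_2,\tau_3)=(\tau_3^*,-\tau_2^* )\tanh s$.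
   Context: Quaternions $\mathbb H=\mathbb R^4$ with basis $1,i,j,k$, $\mathbb C=\operatorname{span}_{\mathbb R}\{1,i\}$. Conjugate surface: $df^*=-*df$. Simple factor dressing with parameter $\mu$: with $a=\frac{\mu+\mu^{-1}}2$, $b=i\frac{\mu^{-1}-\mu}2$, $f^\mu=-f\frac{a-1}2+f^*\frac b2-\frac{b}{a-1}\big(f\frac b2+f^*\frac{a-1}2\big)$. *)

(* Defs.v *)
From Stdlib Require Export Reals.
Open Scope R_scope.

(* Quaternions H = R^4 with basis 1,i,j,k. *)
Record H := mkH { q0 : R; q1 : R; q2 : R; q3 : R }.

Definition Hadd (p q : H) : H :=
  mkH (q0 p + q0 q) (q1 p + q1 q) (q2 p + q2 q) (q3 p + q3 q).
Definition Hopp (p : H) : H := mkH (- q0 p) (- q1 p) (- q2 p) (- q3 p).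
Definition Hsub (p q : H) : H := Hadd p (Hopp q).
(* Hamilton product: i^2=j^2=k^2=ijk=-1 *)
Definition Hmul (p q : H) : H :=
  mkH (q0 p * q0 q - q1 p * q1 q - q2 p * q2 q - q3 p * q3 q)
      (q0 p * q1 q + q1 p * q0 q + q2 p * q3 q - q3 p * q2 q)
      (q0 p * q2 q - q1 p * q3 q + q2 p * q0 q + q3 p * q1 q)
      (q0 p * q3 q + q1 p * q2 q - q2 p * q1 q + q3 p * q0 q).
Definition Hconj (p : H) : H := mkH (q0 p) (- q1 p) (- q2 p) (- q3 p).
Definition Hnorm2 (p : H) : R := q0 p ^ 2 + q1 p ^ 2 + q2 p ^ 2 + q3 p ^ 2.
Definition Hinv (p : H) : H :=
  let n := Hnorm2 p in
  mkH (q0 p / n) (- q1 p / n) (- q2 p / n) (- q3 p / n).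
Definition Hdiv (p q : H) : H := Hmul p (Hinv q).

Definition Hreal (r : R) : H := mkH r 0 0 0.
Definition Hcplx (x y : R) : H := mkH x y 0 0.
Definition H1 : H := Hreal 1.
Definition Hi : H := Hcplx 0 1.
Definition Hhalf : H := Hreal (/ 2).

Definition dress_a (mu : H) : H := Hmul (Hadd mu (Hinv mu)) Hhalf.
Definition dress_b (mu : H) : H := Hmul Hi (Hmul (Hsub (Hinv mu) mu) Hhalf).

Definition dress (mu f fs : H) : H :=
  let a := dress_a mu in
  let b := dress_b mu in
  let am1 := Hsub a H1 in
  Hsub (Hadd (Hopp (Hmul f (Hmul am1 Hhalf))) (Hmul fs (Hmul b Hhalf)))
       (Hmul (Hdiv b am1)
             (Hadd (Hmul f (Hmul b Hhalf)) (Hmul fs (Hmul am1 Hhalf)))).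

(* Main.v *)
Require Import Defs.
From Stdlib Require Import Lra.

Lemma cmul a b c d : Hmul (mkH a b 0 0) (mkH c d 0 0) = mkH (a*c-b*d) (a*d+b*c) 0 0.
Proof. unfold Hmul; cbn; f_equal; ring. Qed.
Lemma cinv a b : Hinv (mkH a b 0 0) = mkH (a/(a^2+b^2)) (-b/(a^2+b^2)) 0 0.
Proof. unfold Hinv, Hnorm2; cbv zeta; cbn [q0 q1 q2 q3].
  replace (a^2+b^2+0^2+0^2) with (a^2+b^2) by ring. f_equal; unfold Rdiv; ring. Qed.
Lemma cadd a b c d : Hadd (mkH a b 0 0) (mkH c d 0 0) = mkH (a+c) (b+d) 0 0.
Proof. unfold Hadd; cbn; f_equal; ring. Qed.
Lemma csub a b c d : Hsub (mkH a b 0 0) (mkH c d 0 0) = mkH (a-c) (b-d) 0 0.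
Proof. unfold Hsub, Hadd, Hopp; cbn; f_equal; ring. Qed.
Lemma cconj a b : Hconj (mkH a b 0 0) = mkH a (-b) 0 0.
Proof. unfold Hconj; cbn; f_equal; ring. Qed.

Lemma Hmul_mk a b c d e f g h : Hmul (mkH a b c d) (mkH e f g h) =
  mkH (a * e - b * f - c * g - d * h) (a * f + b * e + c * h - d * g)
      (a * g - b * h + c * e + d * f) (a * h + b * g - c * f + d * e).
Proof. reflexivity. Qed.
Lemma Hadd_mk a b c d e f g h : Hadd (mkH a b c d) (mkH e f g h) = mkH (a+e) (b+f) (c+g) (d+h).
Proof. reflexivity. Qed.
Lemma Hopp_mk a b c d : Hopp (mkH a b c d) = mkH (-a) (-b) (-c) (-d).
Proof. reflexivity. Qed.
Lemma Hsub_mk a b c d e f g h : Hsub (mkH a b c d) (mkH e f g h) = mkH (a+-e) (b+-f) (c+-g) (d+-h).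
Proof. reflexivity. Qed.
Lemma Hhalf_mk : Hhalf = mkH (/2) 0 0 0. Proof. reflexivity. Qed.

Lemma mkH_eq a b c d a' b' c' d' : a = a' -> b = b' -> c = c' -> d = d' -> mkH a b c d = mkH a' b' c' d'.
Proof. intros; subst; reflexivity. Qed.

Ltac hsimp := repeat (rewrite Hhalf_mk || rewrite Hmul_mk || rewrite Hadd_mk || rewrite Hopp_mk || rewrite Hsub_mk).

Ltac csimp := unfold Hdiv, H1, Hi, Hhalf, Hreal, Hcplx;
  repeat (rewrite ?cmul, ?cinv, ?cadd, ?csub, ?cconj).

Section S.
Variables mr mi : R.
Hypothesis H0 : (mr, mi) <> (0, 0).
Hypothesis H1' : (mr, mi) <> (1, 0).
Let n := mr^2 + mi^2.
Let d1 := (1-mr)^2 + mi^2.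
Lemma n_nz : n <> 0.
Proof. unfold n; intro E. apply H0.
  pose proof (pow2_ge_0 mr); pose proof (pow2_ge_0 mi).
  assert (A1 : mr^2 = 0) by lra. assert (A2 : mi^2 = 0) by lra.
  f_equal; nra. Qed.
Lemma d1_nz : d1 <> 0.
Proof. unfold d1; intro E. apply H1'.
  pose proof (pow2_ge_0 (1-mr)); pose proof (pow2_ge_0 mi).
  assert (A1 : (1-mr)^2 = 0) by lra. assert (A2 : mi^2 = 0) by lra.
  f_equal; nra. Qed.

Lemma Lam1 : Hsub (dress_a (Hcplx mr mi)) H1 =
  mkH ((mr + mr/n)/2 - 1) ((mi - mi/n)/2) 0 0.
Proof.
  pose proof n_nz. unfold dress_a. csimp. fold n. f_equal; field; auto.
Qed.
Lemma Lb : dress_b (Hcplx mr mi) = mkH ((mi/n + mi)/2) ((mr/n - mr)/2) 0 0.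
Proof.
  pose proof n_nz. unfold dress_b. csimp. fold n. f_equal; field; auto.
Qed.
Lemma Lk : Hdiv (mkH ((mi/n + mi)/2) ((mr/n - mr)/2) 0 0) (mkH ((mr + mr/n)/2 - 1) ((mi - mi/n)/2) 0 0)
  = mkH (-2*mi/d1) ((1-n)/d1) 0 0.
Proof.
  pose proof n_nz. pose proof d1_nz.
  assert (E : ((mr + mr/n)/2 - 1)^2 + ((mi - mi/n)/2)^2 = d1^2/(4*n)).
  { unfold d1, n in *. field. auto. }
  csimp. rewrite E. f_equal; unfold d1, n in *; field; auto.
Qed.
Lemma Lw : Hdiv (Hsub (Hconj (Hcplx mr mi)) H1) (Hmul (Hconj (Hcplx mr mi)) (Hsub H1 (Hcplx mr mi)))
  = mkH ((2*n - n*mr - mr)/(n*d1)) (mi*(n-1)/(n*d1)) 0 0.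
Proof.
  pose proof n_nz. pose proof d1_nz.
  csimp.
  match goal with |- context [?x ^ 2 + ?y ^ 2] => assert (E : x^2+y^2 = n*d1) end.
  { unfold n, d1. ring. }
  rewrite E. f_equal; unfold d1, n in *; field; auto.
Qed.
End S.

Lemma dress_val mr mi x0 x1 x2 x3 y0 y1 y2 y3 :
  (mr, mi) <> (0, 0) -> (mr, mi) <> (1, 0) ->
  let n := mr^2 + mi^2 in
  let d1 := (1-mr)^2 + mi^2 in
  let wr := (2*n - n*mr - mr)/(n*d1) in
  let wi := mi*(n-1)/(n*d1) in
  dress (Hcplx mr mi) (mkH x0 x1 x2 x3) (mkH y0 y1 y2 y3) =
  mkH x0 x1
   (x2 * (wr * (1+n)/2) - y3 * (wr * (1-n)/2) - x3 * (wi * (1+n)/2) - y2 * (wi*(1-n)/2))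
   (x2 * (wi * (1+n)/2) - y3 * (wi * (1-n)/2) + x3 * (wr * (1+n)/2) + y2 * (wr*(1-n)/2)).
Proof.
  intros Ha Hb n d1 wr wi.
  pose proof (n_nz mr mi Ha). pose proof (d1_nz mr mi Hb).
  unfold dress. cbv zeta. rewrite (Lam1 mr mi), (Lb mr mi), (Lk mr mi).
  Time hsimp.
  unfold wr, wi, d1, n in *.
  apply mkH_eq; field; repeat split; auto.
  all: assumption.
Qed.

Lemma H1_mk : H1 = mkH 1 0 0 0. Proof. reflexivity. Qed.

Lemma dress_lin mu f fs t ts :
  dress mu (Hadd f t) (Hadd fs ts) = Hadd (dress mu f fs) (dress mu t ts).
Proof.
  unfold dress. cbv zeta.
  generalize (dress_a mu) (dress_b mu). intros [a0 a1 a2 a3] [b0 b1 b2 b3].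
  rewrite H1_mk, Hsub_mk.
  generalize (Hdiv (mkH b0 b1 b2 b3) (mkH (a0 + - (1)) (a1 + - 0) (a2 + - 0) (a3 + - 0))).
  intros [k0 k1 k2 k3].
  destruct f, fs, t, ts. hsimp.
  apply mkH_eq; ring.
Qed.

Lemma key (mr mi s t q0w q1w : R) :
  (mr, mi) <> (0, 0) -> s = - ln (sqrt (mr ^ 2 + mi ^ 2)) ->
  exp s * cos t = q0w -> exp s * sin t = q1w ->
  let n := mr^2+mi^2 in
  cos t * cosh s = q0w * (1+n)/2 /\ cos t * sinh s = q0w * (1-n)/2 /\
  sin t * cosh s = q1w * (1+n)/2 /\ sin t * sinh s = q1w * (1-n)/2.
Proof.
  intros H0 Hs Hc Hsn n.
  assert (Hn : 0 < n).
  { unfold n. destruct (Req_dec mr 0); [destruct (Req_dec mi 0)|].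
    - subst; congruence.
    - nra. - nra. }
  assert (Hq : sqrt n * sqrt n = n) by (apply sqrt_sqrt; lra).
  assert (Hsq : 0 < sqrt n) by (apply sqrt_lt_R0; lra).
  assert (He : exp s = / sqrt n).
  { rewrite Hs, exp_Ropp, exp_ln; auto. }
  assert (He' : exp (- s) = sqrt n).
  { rewrite exp_Ropp, He, Rinv_inv; auto. }
  unfold cosh, sinh. rewrite He'. rewrite He in Hc, Hsn.
  assert (cos t = q0w * sqrt n) by (rewrite <- Hc; field; lra).
  assert (sin t = q1w * sqrt n) by (rewrite <- Hsn; field; lra).
  rewrite He, H, H1.
  remember (sqrt n) as r. clearbody n. rewrite <- Hq.
  repeat split; field; lra.
Qed.
Theorem mainTheorem15
  (X : Type) (x0 : X)              (* the universal cover \tilde M, nonempty *)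
  (gamma : X -> X)                  (* deck transformation gamma *)
  (f fs : X -> H)                   (* f and its conjugate surface f^* *)
  (tau taus : H)
  (Hf : forall p, f (gamma p) = Hadd (f p) tau)
  (Hfs : forall p, fs (gamma p) = Hadd (fs p) taus)
  (mr mi : R)                       (* mu = mr + i mi *)
  (Hmu0 : (mr, mi) <> (0, 0)) (Hmu1 : (mr, mi) <> (1, 0))
  (s t : R)
  (Hs : s = - ln (sqrt (mr ^ 2 + mi ^ 2)))
  (Ht : let mu := Hcplx mr mi in
        let w := Hdiv (Hsub (Hconj mu) H1) (Hmul (Hconj mu) (Hsub H1 mu)) in
        exp s * cos t = q0 w /\ exp s * sin t = q1 w) :
  let mu := Hcplx mr mi in
  let fmu := fun p => dress mu (f p) (fs p) in
  let A := q2 tau * cosh s - q3 taus * sinh s in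
  let B := q3 tau * cosh s + q2 taus * sinh s in
  let taumu := mkH (q0 tau) (q1 tau) (cos t * A - sin t * B) (sin t * A + cos t * B) in
  (forall p, fmu (gamma p) = Hadd (fmu p) taumu) /\
  ((forall p, fmu (gamma p) = fmu p) <->
   (q0 tau = 0 /\ q1 tau = 0 /\
    q2 tau = q3 taus * tanh s /\ q3 tau = - q2 taus * tanh s)).
Proof.
  intros mu fmu A B taumu.
  cbv zeta in Ht. rewrite (Lw mr mi Hmu0 Hmu1) in Ht. cbn [q0 q1] in Ht.
  destruct Ht as [Hc Hsn].
  destruct (key mr mi s t _ _ Hmu0 Hs Hc Hsn) as (K1 & K2 & K3 & K4).
  assert (Hd : dress mu tau taus = taumu).
  { destruct tau as [x0' x1 x2 x3], taus as [y0 y1 y2 y3].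
    unfold mu. rewrite dress_val by assumption.
    unfold taumu, A, B; cbn [q0 q1 q2 q3].
    cbv zeta in K1, K2, K3, K4.
    apply mkH_eq; try reflexivity.
    - replace (cos t * (x2 * cosh s - y3 * sinh s) - sin t * (x3 * cosh s + y2 * sinh s))
        with (x2 * (cos t * cosh s) - y3 * (cos t * sinh s) - x3 * (sin t * cosh s) - y2 * (sin t * sinh s)) by ring.
      rewrite K1, K2, K3, K4. reflexivity.
    - replace (sin t * (x2 * cosh s - y3 * sinh s) + cos t * (x3 * cosh s + y2 * sinh s))
        with (x2 * (sin t * cosh s) - y3 * (sin t * sinh s) + x3 * (cos t * cosh s) + y2 * (cos t * sinh s)) by ring.
      rewrite K1, K2, K3, K4. reflexivity. }
  assert (Hmain : forall p, fmu (gamma p) = Hadd (fmu p) taumu).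
  { intro p. unfold fmu. rewrite Hf, Hfs, dress_lin, Hd. reflexivity. }
  split; [exact Hmain|].
  assert (Hch : 0 < cosh s) by (unfold cosh; pose proof (exp_pos s); pose proof (exp_pos (-s)); lra).
  assert (Htanh : tanh s = sinh s / cosh s) by reflexivity.
  rewrite Htanh.
  split.
  - intro Hz. specialize (Hz x0). rewrite Hmain in Hz.
    destruct (fmu x0) as [a0 a1 a2 a3]. unfold Hadd in Hz. injection Hz as E0 E1 E2 E3.
    unfold taumu in *; cbn [q0 q1 q2 q3] in *.
    assert (HA : A = 0 /\ B = 0).
    { pose proof (sin2_cos2 t). unfold Rsqr in *.
      assert (Ha : cos t * A - sin t * B = 0) by lra.
      assert (Hb : sin t * A + cos t * B = 0) by lra.
      assert (A = A * (sin t * sin t + cos t * cos t)) by (rewrite H; ring).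
      assert (B = B * (sin t * sin t + cos t * cos t)) by (rewrite H; ring).
      split; nra. }
    destruct HA as [HA HB]. unfold A, B in HA, HB.
    repeat split; try lra.
    + apply (Rmult_eq_reg_r (cosh s)); [|lra]. field_simplify; lra.
    + apply (Rmult_eq_reg_r (cosh s)); [|lra]. field_simplify; lra.
  - intros (E0 & E1 & E2 & E3) p. rewrite Hmain.
    assert (HA : A = 0). { unfold A. rewrite E2. field. lra. }
    assert (HB : B = 0). { unfold B. rewrite E3. field. lra. }
    unfold taumu. rewrite HA, HB, E0, E1.
    destruct (fmu p) as [c0 c1 c2 c3]; unfold Hadd; cbn [q0 q1 q2 q3]. apply mkH_eq; ring.
Qed.
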